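(* The name-generation monad $T$ on $[\mathsf{Inj},\mathsf{Set}]$ is observational.
   Context: $\mathsf{Inj}$ is the category of finite sets and injections; $[\mathsf{Inj},\mathsf{Set}]$ is the functor category (cartesian, products computed pointwise). The name-generation monad is given by $(TX)(a)=\operatorname{colim}_{b\in\mathsf{Inj}}X(a+b)$ (the colimit of the functor $b\mapsto X(a+b)$, acting on injections $b\to b'$ via $1_a+(-)$), with unit induced by $b=\emptyset$ and multiplication induced by $(a+b)+c\cong a+(b+c)$; it is a commutative (and affine) monad. For a commutative monad $T$ on a cartesian monoidal category: $\mathsf{Kl}(T)$ has morphisms $f:A\rightsquigarrow B$ corresponding to $f^\sharp:A\to TB$, composition $(g\circledcirc f)^\sharp=\mu\circ T(g^\sharp)\circ f^\sharp$, tensor $\otimes$ equal to $\times$ on objects with $(f\otimes g)^\sharp=\nabla\circ(f^\sharp\times g^\sharp)$; $\mathsf{force}_A^\sharp=1_{TA}$; $\mathsf{copy}_n^\sharp=\eta\circ\Delta_n:TX\to T((TX)^n)$; $\mathsf{samp}_n=\mathsf{force}^{\otimes n}\circledcirc\mathsf{copy}_n:TX\rightsquigarrow X^{\otimes n}$. $T$ is observational if for every $X$ the family $(\mathsf{samp}_n)_{n\in\mathbb{N}}$ is jointly monic in $\mathsf{Kl}(T)$. *)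

(* Defs.v *)
From Stdlib Require Import Relations ClassicalEpsilon.
From mathcomp Require Import all_boot.



Unset Printing Implicit Defensive.

Record inj (m n : nat) := Inj { injf :> 'I_m -> 'I_n; injfP : injective injf }.
Arguments Inj {m n}.
Arguments injf {m n}.
Arguments injfP {m n}.

Definition idI (n : nat) : inj n n :=
  Inj (id : 'I_n -> 'I_n) (fun x y (h : id x = id y) => h).

Definition compI {m n p} (g : inj n p) (f : inj m n) : inj m p :=
  Inj (g \o f) (ssrfun.inj_comp (injfP g) (injfP f)).

Definition sum_fun {a a' b b'} (f : 'I_a -> 'I_a') (g : 'I_b -> 'I_b')
  (i : 'I_(a + b)) : 'I_(a' + b') :=
  match split i with
  | inl j => lshift b' (f j)
  | inr k => rshift a' (g k)
  end.

Lemma sum_fun_inj {a a' b b'} (f : 'I_a -> 'I_a') (g : 'I_b -> 'I_b') :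
  injective f -> injective g -> injective (sum_fun f g).
Proof.
move=> fi gi i1 i2; rewrite /sum_fun.
case: splitP => j1 e1; case: splitP => j2 e2 /(congr1 val) /= E;
  apply: val_inj; rewrite /= e1 e2.
- by rewrite (fi _ _ (val_inj E)).
- by have := ltn_ord (f j1); rewrite E -ltn_subRL subnn.
- by have := ltn_ord (f j2); rewrite -E -ltn_subRL subnn.
- by move/addnI: E => /val_inj /gi ->.
Qed.

Definition sumI {a a' b b'} (f : inj a a') (g : inj b b') : inj (a + b) (a' + b') :=
  Inj (sum_fun f g) (sum_fun_inj f g (injfP f) (injfP g)).

Record psh := Psh { ob :> nat -> Type; act : forall m n, inj m n -> ob m -> ob n }.
Arguments act {p m n}.

Definition is_functor (X : psh) : Prop :=
  (forall n (x : X n), act (idI n) x = x) /\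
  (forall m n p (f : inj m n) (g : inj n p) (x : X m),
      act (compI g f) x = act g (act f x)).

Definition nat_trans (X Y : psh) := forall n, X n -> Y n.

Definition is_natural {X Y : psh} (al : nat_trans X Y) : Prop :=
  forall m n (f : inj m n) (x : X m), al n (act f x) = act f (al m x).

Definition pprod (X Y : psh) : psh :=
  @Psh (fun n => (X n * Y n)%type)
       (fun m n f p => (act f p.1, act f p.2)).

Definition pterm : psh := @Psh (fun _ => unit) (fun _ _ _ u => u).

(* (T X)(a) = colim_{b in Inj} X(a + b), computed as the quotient of
   {b & X(a+b)} by the equivalence relation generated by
   (b, x) ~ (b', X(1_a + h) x) for h : b -> b' in Inj.  The quotient is
   represented by the set of equivalence classes. *)
Definition tcar (X : psh) (a : nat) := {b : nat & X (a + b)}.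

Definition tstep (X : psh) (a : nat) (z w : tcar X a) : Prop :=
  exists h : inj (projT1 z) (projT1 w),
    projT2 w = act (sumI (idI a) h) (projT2 z).

Definition teqv (X : psh) (a : nat) := clos_refl_sym_trans _ (@tstep X a).

Definition Tob (X : psh) (a : nat) :=
  {P : tcar X a -> Prop | exists z, P = teqv X a z}.

Definition tcls {X : psh} {a : nat} (z : tcar X a) : Tob X a :=
  exist _ (teqv X a z) (ex_intro _ z erefl).

Definition trepr {X : psh} {a : nat} (t : Tob X a) : tcar X a :=
  proj1_sig (constructive_indefinite_description _ (proj2_sig t)).

Definition Tact (X : psh) {m n} (f : inj m n) (t : Tob X m) : Tob X n :=
  let z := trepr t in
  tcls (existT (fun b => X (n + b)) (projT1 z)
               (act (sumI f (idI (projT1 z))) (projT2 z))).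

Definition T (X : psh) : psh := @Psh (Tob X) (fun m n => @Tact X m n).

Definition eta (X : psh) : nat_trans X (T X) := fun a x =>
  tcls (existT (fun b => X (a + b)) 0
               (act (Inj _ (@cast_ord_inj _ _ (esym (addn0 a)))) x)).

Definition mu {X : psh} : nat_trans (T (T X)) (T X) := fun a t =>
  let z := trepr t in
  let u := trepr (projT2 z) in
  tcls (existT (fun b => X (a + b)) (projT1 z + projT1 u)
    (act (Inj _ (@cast_ord_inj _ _ (esym (addnA a (projT1 z) (projT1 u)))))
         (projT2 u))).

Definition Tmap {X Y : psh} (al : nat_trans X Y) : nat_trans (T X) (T Y) :=
  fun a t => let z := trepr t in
  tcls (existT (fun b => Y (a + b)) (projT1 z) (al _ (projT2 z))).

Definition tstr (A B : psh) : nat_trans (pprod A (T B)) (T (pprod A B)) :=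
  fun a p => let z := trepr p.2 in
  tcls (existT (fun b => (pprod A B) (a + b)) (projT1 z)
               (act (Inj _ (@lshift_inj a (projT1 z))) p.1, projT2 z)).

Definition tcostr (A B : psh) : nat_trans (pprod (T A) B) (T (pprod A B)) :=
  fun a p => let z := trepr p.1 in
  tcls (existT (fun b => (pprod A B) (a + b)) (projT1 z)
               (projT2 z, act (Inj _ (@lshift_inj a (projT1 z))) p.2)).

Definition nabla (A B : psh) : nat_trans (pprod (T A) (T B)) (T (pprod A B)) :=
  fun a p => mu a (Tmap (tcostr A B) a (tstr (T A) B a p)).

(* a Kleisli morphism f : A ~> B is given by f^# : A -> T B *)
Definition kid (A : psh) : nat_trans A (T A) := eta A.

Definition kcomp {A B C : psh} (g : nat_trans B (T C)) (f : nat_trans A (T B))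
  : nat_trans A (T C) := fun a x => mu a (Tmap g a (f a x)).

Definition ktensor {A B C D : psh} (f : nat_trans A (T B)) (g : nat_trans C (T D))
  : nat_trans (pprod A C) (T (pprod B D)) :=
  fun a p => nabla B D a (f a p.1, g a p.2).

Fixpoint ppow (X : psh) (n : nat) : psh :=
  match n with 0 => pterm | n'.+1 => pprod (ppow X n') X end.

Definition force (X : psh) : nat_trans (T X) (T X) := fun a t => t.

Fixpoint force_pow (X : psh) (n : nat) : nat_trans (ppow (T X) n) (T (ppow X n)) :=
  match n return nat_trans (ppow (T X) n) (T (ppow X n)) with
  | 0 => kid pterm
  | n'.+1 => ktensor (force_pow X n') (force X)
  end.

Fixpoint diag (Y : psh) (n : nat) : nat_trans Y (ppow Y n) :=
  match n return nat_trans Y (ppow Y n) with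
  | 0 => fun _ _ => tt
  | n'.+1 => fun a y => (diag Y n' a y, y)
  end.

Definition copy (X : psh) (n : nat) : nat_trans (T X) (T (ppow (T X) n)) :=
  fun a t => eta _ a (diag (T X) n a t).

Definition samp (X : psh) (n : nat) : nat_trans (T X) (T (ppow X n)) :=
  kcomp (force_pow X n) (copy X n).

(* Main.v *)
Require Import Defs.
From mathcomp Require Import all_boot.
From mathcomp Require Import zify.
From Stdlib Require Import Relations ClassicalEpsilon FunctionalExtensionality PropExtensionality ProofIrrelevance.

Set Implicit Arguments.
Unset Strict Implicit.
Unset Printing Implicit Defensive.


Lemma inj_ext m n (f g : inj m n) : (forall i, val (f i) = val (g i)) -> f = g.
Proof.
case: f g => f fi [g gi] /= E.
have efg : f = g by apply: functional_extensionality => i; apply: val_inj; exact: E.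
subst g; f_equal; apply: proof_irrelevance.
Qed.

Lemma act_ext (X : psh) m n (f g : inj m n) (x : X m) :
  (forall i, val (f i) = val (g i)) -> act f x = act g x.
Proof. by move/inj_ext->. Qed.

Definition hn {m n} (f : inj m n) (v : nat) : nat :=
  if insub v is Some o then val (f o) else 0.

Lemma hnE m n (f : inj m n) (o : 'I_m) : val (f o) = hn f (val o).
Proof. by rewrite /hn valK. Qed.

Lemma hn_lt m n (f : inj m n) v : v < m -> hn f v < n.
Proof. by move=> lv; rewrite /hn; case: insubP => [o _ _|]; [exact: ltn_ord|rewrite lv]. Qed.

Lemma hn_inj m n (f : inj m n) v w : v < m -> w < m -> hn f v = hn f w -> v = w.
Proof.
move=> lv lw; rewrite /hn (insubT (fun x => x < m) lv) (insubT (fun x => x < m) lw) => /val_inj /(injfP f).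
by move/(congr1 val).
Qed.

Lemma sumIE a a' b b' (f : inj a a') (g : inj b b') (i : 'I_(a + b)) :
  val (sumI f g i) = if val i < a then hn f (val i) else a' + hn g (val i - a).
Proof.
rewrite /sumI /= /sum_fun; case: splitP => [j|k] e /=.
  by rewrite e hnE.
by rewrite e addKn hnE.
Qed.

Definition mkI m n (F : nat -> nat) (Hlt : forall i, i < m -> F i < n)
  (Hi : forall i j, i < m -> j < m -> F i = F j -> i = j) : inj m n.
refine (@Inj m n (fun o => Ordinal (Hlt _ (ltn_ord o))) _).
move=> x y /(congr1 val) /= E; apply: val_inj; exact: Hi (ltn_ord x) (ltn_ord y) E.
Defined.

Lemma mkIE m n F Hlt Hi (o : 'I_m) : val (@mkI m n F Hlt Hi o) = F (val o).
Proof. by []. Qed.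

Lemma act_comp (X : psh) (HX : is_functor X) m n p (f : inj m n) (g : inj n p) (x : X m) :
  act g (act f x) = act (compI g f) x.
Proof. by rewrite HX.2. Qed.

Lemma act_id (X : psh) (HX : is_functor X) n (f : inj n n) (x : X n) :
  (forall i, val (f i) = val i) -> act f x = x.
Proof. by move=> E; rewrite (act_ext _ (g := idI n)) // HX.1. Qed.

Lemma amalg b e1 e2 (h : inj b e1) (g : inj b e2) :
  exists v (p : inj e1 v) (q : inj e2 v), forall i, p (h i) = q (g i).
Proof.
pose qf (j : 'I_e2) : 'I_(e1 + e2) :=
  if [pick i | g i == j] is Some i then lshift e2 (h i) else rshift e1 j.
have qi : injective qf.
  move=> j1 j2; rewrite /qf.
  case: pickP => [i1 /eqP E1|N1]; case: pickP => [i2 /eqP E2|N2].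
  - by move/lshift_inj/(injfP h) => E; rewrite -E1 -E2 E.
  - by move/(congr1 val) => /= E; have := ltn_ord (h i1); rewrite E ltnNge leq_addr.
  - by move/(congr1 val) => /= E; have := ltn_ord (h i2); rewrite -E ltnNge leq_addr.
  - by move/(congr1 val) => /= /addnI /val_inj.
exists (e1 + e2), (Inj _ (@lshift_inj e1 e2)), (Inj qf qi) => i /=.
rewrite /qf; case: pickP => [i' /eqP E|N]; last by have := N i; rewrite eqxx.
by rewrite (injfP g _ _ E).
Qed.

Lemma ordv n (i : 'I_n) : val i < n. Proof. exact: ltn_ord. Qed.

Lemma hn_gen m n (f : inj m n) (F : nat -> nat) :
  (forall o, val (f o) = F (val o)) -> forall v, hn f v = if v < m then F v else 0.
Proof.
move=> E v; rewrite /hn; case: insubP => [o lt e|nlt]; last by rewrite (negbTE nlt).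
by rewrite lt E e.
Qed.

Lemma hn_sumI a a' b b' (f : inj a a') (g : inj b b') v :
  hn (sumI f g) v = if v < a + b then (if v < a then hn f v else a' + hn g (v - a)) else 0.
Proof. by apply: (hn_gen (F := fun v => if v < a then hn f v else a' + hn g (v - a))) => o; rewrite sumIE. Qed.

Lemma hn_idI n v : hn (idI n) v = if v < n then v else 0.
Proof. by apply: (hn_gen (F := id)). Qed.

Lemma hn_lsh m k v : hn (Inj _ (@lshift_inj m k)) v = if v < m then v else 0.
Proof. by apply: (hn_gen (F := id)). Qed.

Lemma hn_cast m n (e : m = n) v : hn (Inj _ (@cast_ord_inj m n e)) v = if v < m then v else 0.
Proof. by apply: (hn_gen (F := id)). Qed.

Lemma hn_comp m n p (f : inj m n) (g : inj n p) v :
  hn (compI g f) v = if v < m then hn g (hn f v) else 0.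
Proof. by apply: (hn_gen (F := fun v => hn g (hn f v))) => o /=; rewrite hnE (hnE f). Qed.

Lemma hn_mk m n F Hlt Hi v : hn (@mkI m n F Hlt Hi) v = if v < m then F v else 0.
Proof. by apply: (hn_gen (F := F)). Qed.





Lemma if_T (A : Type) (x y : A) : (if true then x else y) = x. Proof. by []. Qed.
Lemma if_F (A : Type) (x y : A) : (if false then x else y) = y. Proof. by []. Qed.

Ltac split_if := match goal with |- context [if ?c then _ else _] =>
   lazymatch c with context [if _ then _ else _] => fail | _ =>
   let E := fresh "E" in case E: c; rewrite ?if_T ?if_F; try rewrite !addKn in E |- * end end.

Ltac hnlt := repeat match goal with
   | |- context [hn ?f ?x] =>
   lazymatch goal with _ : is_true (x < _) -> is_true (hn f x < _) |- _ => fail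
   | _ => have := @hn_lt _ _ f x; move=> ? end
   | H : context [hn ?f ?x] |- _ =>
   lazymatch goal with _ : is_true (x < _) -> is_true (hn f x < _) |- _ => fail
   | _ => have := @hn_lt _ _ f x; move=> ? end
   end.

Ltac hncong := repeat match goal with
   | |- context [hn ?f ?x] => match goal with |- context [hn f ?y] =>
      assert_fails (constr_eq x y);
      lazymatch goal with _ : x = y -> hn f x = hn f y |- _ => fail
      | _ => have : x = y -> hn f x = hn f y by move->
      end; move=> ? end
   end.

Ltac pw := let i := fresh "i" in move=> i; have := ordv i;
  rewrite ?hnE ?(hn_sumI, hn_idI, hn_lsh, hn_cast, hn_comp, hn_mk);
  repeat split_if; hnlt; hncong; simpl in *; lia.

Definition span (X : psh) a (z w : tcar X a) : Prop :=
  exists e (h : inj (projT1 z) e) (h' : inj (projT1 w) e),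
    act (sumI (idI a) h) (projT2 z) = act (sumI (idI a) h') (projT2 w).

Lemma sum_comp (X : psh) (HX : is_functor X) a b e v (h : inj b e) (p : inj e v) (y : X (a + b)) :
  act (sumI (idI a) (compI p h)) y = act (sumI (idI a) p) (act (sumI (idI a) h) y).
Proof. rewrite act_comp //; apply: act_ext; pw. Qed.

Lemma span_refl (X : psh) (HX : is_functor X) a z : @span X a z z.
Proof. by exists (projT1 z), (idI _), (idI _). Qed.

Lemma span_sym (X : psh) a z w : @span X a z w -> span w z.
Proof. by case=> e [h [h' E]]; exists e, h', h. Qed.

Lemma span_trans (X : psh) (HX : is_functor X) a z w u :
  @span X a z w -> span w u -> span z u.
Proof.
case=> e1 [h1 [h2 E1]] [e2 [g2 [g3 E2]]].
have [v [p [q Epq]]] := amalg h2 g2.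
exists v, (compI p h1), (compI q g3).
have E : compI p h2 = compI q g2 by apply: inj_ext => i /=; rewrite Epq.
rewrite !sum_comp // E1 -sum_comp // E sum_comp // E2 -sum_comp //.
Qed.

Lemma step_span (X : psh) (HX : is_functor X) a z w : @tstep X a z w -> span z w.
Proof.
case: z w => b y [b' y'] [h /= E]; exists b', h, (idI b') => /=.
by rewrite E [RHS]act_id //; pw.
Qed.

Lemma teqv_span (X : psh) (HX : is_functor X) a z w : teqv X a z w <-> span z w.
Proof.
split.
  elim=> {z w} [z w|z|z w _|z w u _ IH1 _ IH2].
  - exact: step_span.
  - exact: span_refl.
  - exact: span_sym.
  - exact: span_trans IH1 IH2.
case: z w => b y [b' y'] [e [h [h' /= E]]].
apply: (rst_trans _ _ _ (existT _ e (act (sumI (idI a) h) y))).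
  by apply: rst_step; exists h.
apply: rst_sym; apply: rst_step; exists h' => /=; by rewrite E.
Qed.

Lemma teqv_equiv (X : psh) (HX : is_functor X) a z w u :
  teqv X a z w -> teqv X a w u -> teqv X a z u.
Proof. exact: rst_trans. Qed.

Lemma tcls_eq (X : psh) (HX : is_functor X) a (z w : tcar X a) :
  tcls z = tcls w <-> span z w.
Proof.
rewrite -teqv_span //; split.
  move/(congr1 (@proj1_sig _ _)) => /= E.
  by rewrite E; apply: rst_refl.
move=> zw; rewrite /tcls.
have E : teqv X a z = teqv X a w.
  apply: functional_extensionality => u; apply: propositional_extensionality; split.
    by move=> zu; apply: rst_trans (rst_sym _ _ _ _ zw) zu.
  by move=> wu; apply: rst_trans zw wu.
move: (ex_intro _ z _) (ex_intro _ w _); rewrite E => p1 p2.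
by rewrite (proof_irrelevance _ p1 p2).
Qed.

Lemma tcls_repr (X : psh) a (t : Tob X a) : tcls (trepr t) = t.
Proof.
case: t => P pf; rewrite /trepr /=.
case: (constructive_indefinite_description _ pf) => z ez /=.
subst P; rewrite /tcls; f_equal; apply: proof_irrelevance.
Qed.

Lemma trepr_span (X : psh) (HX : is_functor X) a (z : tcar X a) : span (trepr (tcls z)) z.
Proof. by apply/tcls_eq => //; rewrite tcls_repr. Qed.

Lemma tcls_surj (X : psh) a (t : Tob X a) : exists b (y : X (a + b)), t = tcls (existT _ b y).
Proof. by rewrite -(tcls_repr t); case: (trepr t) => b y; exists b, y. Qed.

Lemma Tact_tcls (X : psh) (HX : is_functor X) m n (f : inj m n) b (y : X (m + b)) :
  Tact X f (tcls (existT _ b y)) = tcls (existT (fun b => X (n + b)) b (act (sumI f (idI b)) y)).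
Proof.
rewrite /Tact /=; have := trepr_span HX (existT _ b y).
case: (trepr _) => b' y' [e [h [h' /= E]]].
apply/tcls_eq => //; exists e, h, h' => /=.
have sw : forall k (g : inj k e) (u : X (m + k)),
    act (sumI (idI n) g) (act (sumI f (idI k)) u) = act (sumI f (idI e)) (act (sumI (idI m) g) u).
  by move=> k g u; rewrite !act_comp //; apply: act_ext; pw.
by rewrite !sw E.
Qed.

Lemma T_functor (X : psh) (HX : is_functor X) : is_functor (T X).
Proof.
split.
  move=> n t; have [b [y ->]] := tcls_surj t; rewrite /= Tact_tcls //.
  by rewrite act_id //; pw.
move=> m n p f g t; have [b [y ->]] := tcls_surj t; rewrite /= !Tact_tcls //.
by rewrite act_comp //; congr tcls; congr existT; apply: act_ext; pw.
Qed.

Lemma pprod_functor (X Y : psh) : is_functor X -> is_functor Y -> is_functor (pprod X Y).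
Proof.
move=> [HX1 HX2] [HY1 HY2]; split.
  by move=> n [x y] /=; rewrite HX1 HY1.
by move=> m n p f g [x y] /=; rewrite HX2 HY2.
Qed.

Lemma pterm_functor : is_functor pterm.
Proof. by split. Qed.

Lemma ppow_functor (X : psh) n : is_functor X -> is_functor (ppow X n).
Proof. move=> HX; elim: n => [|n IH] /=; [exact: pterm_functor|exact: pprod_functor]. Qed.

Lemma mu_tcls (X : psh) (HX : is_functor X) a c d (w : X ((a + c) + d)) :
  @mu X a (tcls (existT (fun c => T X (a + c)) c (tcls (existT (fun d => X ((a + c) + d)) d w)))) =
  tcls (existT (fun b => X (a + b)) (c + d) (act (Inj _ (@cast_ord_inj _ _ (esym (addnA a c d)))) w)).
Proof.
have HT := T_functor HX.
rewrite /mu /=; have := trepr_span HT (existT (fun c => T X (a + c)) c (tcls (existT _ d w))).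
case: (trepr _) => c2 S2 [e [h [h2 /= E]]].
move: E; have ES := tcls_repr S2; move: ES.
case: (trepr S2) => d2 w2 /= ES; rewrite -ES.
rewrite !Tact_tcls // => /tcls_eq -/(_ HX) [e' [k [k2 /= E]]].
apply/tcls_eq => //; exists (e + e'), (sumI h k), (sumI h2 k2) => /=.
have sw : forall c0 d0 (h0 : inj c0 e) (k0 : inj d0 e') (u : X ((a + c0) + d0)),
  act (sumI (idI a) (sumI h0 k0)) (act (Inj _ (@cast_ord_inj _ _ (esym (addnA a c0 d0)))) u) =
  act (Inj _ (@cast_ord_inj _ _ (esym (addnA a e e'))))
    (act (sumI (idI (a + e)) k0) (act (sumI (sumI (idI a) h0) (idI d0)) u)).
  by move=> c0 d0 h0 k0 u; rewrite !act_comp //; apply: act_ext; pw.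
by rewrite !sw E.
Qed.

Lemma Tmap_tcls (X Y : psh) (HX : is_functor X) (HY : is_functor Y) (al : nat_trans X Y) :
  is_natural al -> forall a b (y : X (a + b)),
  Tmap al a (tcls (existT _ b y)) = tcls (existT (fun b => Y (a + b)) b (al _ y)).
Proof.
move=> Hal a b y; rewrite /Tmap /=; have := trepr_span HX (existT _ b y).
case: (trepr _) => b' y' [e [h [h' /= E]]].
by apply/tcls_eq => //; exists e, h, h' => /=; rewrite -!Hal E.
Qed.

Lemma tstr_tcls (A B : psh) (HA : is_functor A) (HB : is_functor B) a (p : A a) b (y : B (a + b)) :
  tstr A B a (p, tcls (existT _ b y)) =
  tcls (existT (fun b => (pprod A B) (a + b)) b (act (Inj _ (@lshift_inj a b)) p, y)).
Proof.
rewrite /tstr /=; have := trepr_span HB (existT _ b y).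
case: (trepr _) => b' y' [e [h [h' /= E]]].
apply/tcls_eq; first exact: pprod_functor.
exists e, h, h' => /=; rewrite E; congr pair.
by rewrite !act_comp //; apply: act_ext; pw.
Qed.

Lemma tcostr_tcls (A B : psh) (HA : is_functor A) (HB : is_functor B) a d (w : A (a + d)) (q : B a) :
  tcostr A B a (tcls (existT _ d w), q) =
  tcls (existT (fun b => (pprod A B) (a + b)) d (w, act (Inj _ (@lshift_inj a d)) q)).
Proof.
rewrite /tcostr /=; have := trepr_span HA (existT _ d w).
case: (trepr _) => b' y' [e [h [h' /= E]]].
apply/tcls_eq; first exact: pprod_functor.
exists e, h, h' => /=; rewrite E; congr pair.
by rewrite !act_comp //; apply: act_ext; pw.
Qed.

Lemma eta_nat (X : psh) (HX : is_functor X) : is_natural (eta X).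
Proof.
move=> m n f x; rewrite /eta /= Tact_tcls //; congr tcls; congr existT.
by rewrite !act_comp //; apply: act_ext; pw.
Qed.

Lemma mu_nat (X : psh) (HX : is_functor X) : is_natural (@mu X).
Proof.
have HT := T_functor HX.
move=> m n f F; have [c [t ->]] := tcls_surj F; have [d [w ->]] := tcls_surj t.
rewrite /= Tact_tcls // /= Tact_tcls // !mu_tcls // Tact_tcls //; congr tcls; congr existT.
by rewrite !act_comp //; apply: act_ext; pw.
Qed.

Lemma Tmap_nat (X Y : psh) (HX : is_functor X) (HY : is_functor Y) (al : nat_trans X Y) :
  is_natural al -> is_natural (Tmap al).
Proof.
move=> Hal m n f t; have [b [y ->]] := tcls_surj t.
by rewrite /= Tact_tcls // !Tmap_tcls // Tact_tcls // Hal.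
Qed.

Lemma tstr_nat (A B : psh) (HA : is_functor A) (HB : is_functor B) : is_natural (tstr A B).
Proof.
move=> m n f [p t]; have [b [y ->]] := tcls_surj t.
rewrite /= Tact_tcls // !tstr_tcls // Tact_tcls //; last exact: pprod_functor.
congr tcls; congr existT => /=; congr pair.
by rewrite !act_comp //; apply: act_ext; pw.
Qed.

Lemma tcostr_nat (A B : psh) (HA : is_functor A) (HB : is_functor B) : is_natural (tcostr A B).
Proof.
move=> m n f [t q]; have [b [y ->]] := tcls_surj t.
rewrite /= Tact_tcls // !tcostr_tcls // Tact_tcls //; last exact: pprod_functor.
congr tcls; congr existT => /=; congr pair.
by rewrite !act_comp //; apply: act_ext; pw.
Qed.

Lemma nabla_nat (A B : psh) (HA : is_functor A) (HB : is_functor B) : is_natural (nabla A B).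
Proof.
have HTA := T_functor HA; have HAB := pprod_functor HA HB.
move=> m n f p; rewrite /nabla tstr_nat // Tmap_nat //.
- by rewrite mu_nat.
- exact: pprod_functor.
- exact: T_functor.
- exact: tcostr_nat.
Qed.

Lemma ktensor_nat (A B C D : psh) (HB : is_functor B) (HD : is_functor D)
  (f : nat_trans A (T B)) (g : nat_trans C (T D)) :
  is_natural f -> is_natural g -> is_natural (ktensor f g).
Proof.
move=> Hf Hg m n h [p q]; rewrite /ktensor /= Hf Hg.
exact: (nabla_nat HB HD h (f m p, g m q)).
Qed.

Lemma force_pow_nat (X : psh) (HX : is_functor X) n : is_natural (force_pow X n).
Proof.
elim: n => [|n IH] /=.
  exact: eta_nat pterm_functor.
apply: ktensor_nat => //; exact: ppow_functor.
Qed.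

Lemma diag_nat (Y : psh) n : is_natural (diag Y n).
Proof. by elim: n => [|n IH] //= m k f y; rewrite IH. Qed.

Lemma kcomp_nat (A B C : psh) (HC : is_functor C) (HB : is_functor B)
  (g : nat_trans B (T C)) (f : nat_trans A (T B)) :
  is_natural g -> is_natural f -> is_natural (kcomp g f).
Proof.
move=> Hg Hf m n h x; rewrite /kcomp Hf (Tmap_nat HB _ Hg) //; first by rewrite mu_nat.
exact: T_functor.
Qed.

Lemma samp_nat (X : psh) (HX : is_functor X) n : is_natural (samp X n).
Proof.
have HT := T_functor HX.
apply: kcomp_nat; [exact: ppow_functor|exact: ppow_functor|exact: force_pow_nat|].
move=> m k f t; rewrite /copy diag_nat eta_nat //; exact: ppow_functor.
Qed.

Lemma nabla_tcls (A B : psh) (HA : is_functor A) (HB : is_functor B) a d (w : A (a + d)) b (y : B (a + b)) :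
  nabla A B a (tcls (existT _ d w), tcls (existT _ b y)) =
  tcls (existT (fun b => (pprod A B) (a + b)) (b + d)
    (act (Inj _ (@cast_ord_inj _ _ (esym (addnA a b d)))) (act (sumI (Inj _ (@lshift_inj a b)) (idI d)) w),
     act (Inj _ (@cast_ord_inj _ _ (esym (addnA a b d)))) (act (Inj _ (@lshift_inj (a + b) d)) y))).
Proof.
have HTA := T_functor HA; have HAB := pprod_functor HA HB.
rewrite /nabla tstr_tcls // /= Tact_tcls // Tmap_tcls //.
- by rewrite tcostr_tcls // mu_tcls.
- exact: pprod_functor.
- exact: T_functor.
- exact: tcostr_nat.
Qed.

Fixpoint Dn (n b : nat) : nat := match n with 0 => 0 | n'.+1 => b + Dn n' b end.

Lemma DnE n b : Dn n b = n * b.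
Proof. by elim: n => //= n ->; rewrite mulSn. Qed.

Fixpoint nthc (Y : psh) (n a : nat) : ppow Y n a -> nat -> option (Y a) :=
  match n return ppow Y n a -> nat -> option (Y a) with
  | 0 => fun _ _ => None
  | n'.+1 => fun p i => if i is i'.+1 then @nthc Y n' a p.1 i' else Some p.2
  end.
Arguments nthc {Y n a}.

Lemma nthc_act (Y : psh) n m k (f : inj m k) (p : ppow Y n m) i :
  nthc (act f p) i = omap (act f) (nthc p i).
Proof.
elim: n p i => [|n IH] p [|i] //=.
Qed.

Lemma fp_diag (X : psh) (HX : is_functor X) n a b (y : X (a + b)) :
  exists P, force_pow X n a (diag (T X) n a (tcls (existT _ b y))) = tcls (existT _ (Dn n b) P) /\
  forall i, i < n -> exists M : inj (a + b) (a + Dn n b),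
    (forall o, val (M o) = if val o < a then val o else val o + i * b) /\
    nthc P i = Some (act M y).
Proof.
elim: n => [|n [P [EP HP]]] /=.
  by exists tt; split.
rewrite /ktensor /= EP nabla_tcls //; last exact: ppow_functor.
eexists; split; first reflexivity.
move=> [|i] lti.
  exists (compI (Inj _ (@cast_ord_inj _ _ (esym (addnA a b (Dn n b))))) (Inj _ (@lshift_inj (a + b) (Dn n b)))).
  split; last by rewrite /= act_comp.
  by move=> o /=; rewrite mul0n addn0; case: ifP.
have [M' [HM' EM']] := HP i lti.
exists (compI (Inj _ (@cast_ord_inj _ _ (esym (addnA a b (Dn n b)))))
          (compI (sumI (Inj _ (@lshift_inj a b)) (idI (Dn n b))) M')).
split.
  move=> o; have := ordv o; rewrite hnE !(hn_comp, hn_cast, hn_sumI, hn_lsh, hn_idI).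
  rewrite (hn_gen (F := fun v => if v < a then v else v + i * b) HM') mulSn; set ib := i * b.
  have : ib + b <= Dn n b by rewrite DnE /ib -mulSnr leq_mul2r -ltnS lti orbT.
  by repeat split_if; simpl in *; lia.
rewrite /= !(nthc_act (Y:=X)) EM' /=; congr Some; rewrite !(act_comp HX); exact: act_ext.
Qed.

Lemma pig1 n m (P : nat -> nat -> bool) :
  (forall i1 i2 j, i1 < n -> i2 < n -> j < m -> P i1 j -> P i2 j -> i1 = i2) ->
  #|[set i : 'I_n | [exists j : 'I_m, P i j]]| <= m.
Proof.
move=> Pu.
pose S := [set p : 'I_n * 'I_m | P p.1 p.2].
have sub : [set i : 'I_n | [exists j : 'I_m, P i j]] \subset fst @: S.
  apply/subsetP => i; rewrite inE => /existsP [j Pij].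
  by apply/imsetP; exists (i, j); rewrite // inE.
apply: leq_trans (subset_leq_card sub) _.
apply: leq_trans (leq_imset_card _ _) _.
rewrite -(card_in_imset (f := snd)); last first.
  move=> [i1 j1] [i2 j2]; rewrite !inE /= => P1 P2 ej; subst j2.
  by congr pair; apply: val_inj; apply: (Pu _ _ j1) => //; apply: ltn_ord.
by rewrite -[X in _ <= X]card_ord max_card.
Qed.

Lemma pigeon n m1 m2 (P1 P2 : nat -> nat -> bool) :
  (forall i1 i2 j, i1 < n -> i2 < n -> j < m1 -> P1 i1 j -> P1 i2 j -> i1 = i2) ->
  (forall i1 i2 j, i1 < n -> i2 < n -> j < m2 -> P2 i1 j -> P2 i2 j -> i1 = i2) ->
  m1 + m2 < n ->
  exists i, i < n /\ (forall j, j < m1 -> ~~ P1 i j) /\ (forall j, j < m2 -> ~~ P2 i j).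
Proof.
move=> U1 U2 lt.
set A1 := [set i : 'I_n | [exists j : 'I_m1, P1 i j]].
set A2 := [set i : 'I_n | [exists j : 'I_m2, P2 i j]].
have : ~~ ([set: 'I_n] \subset A1 :|: A2).
  apply/negP => /subset_leq_card; rewrite cardsT card_ord => le.
  have := leq_trans le (leq_trans (leq_card_setU A1 A2) (leq_add (pig1 U1) (pig1 U2))).
  by rewrite leqNgt lt.
case/subsetPn => i _; rewrite !inE negb_or => /andP [N1 N2].
exists i; split; first exact: ltn_ord.
split=> j ltj.
  by apply/negP => Pj; move/existsP: N1; apply; exists (Ordinal ltj).
by apply/negP => Pj; move/existsP: N2; apply; exists (Ordinal ltj).
Qed.

Lemma samp_tcls (X : psh) (HX : is_functor X) n a b (y : X (a + b)) :
  exists Q, samp X n a (tcls (existT _ b y)) = tcls (existT (fun d => ppow X n (a + d)) (Dn n b) Q) /\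
  forall i, i < n -> exists M : inj (a + b) (a + Dn n b),
    (forall o, val (M o) = if val o < a then val o else val o + i * b) /\
    nthc Q i = Some (act M y).
Proof.
have HT := T_functor HX.
rewrite /samp /kcomp /copy /eta Tmap_tcls //; first last.
- exact: force_pow_nat.
- exact: T_functor (ppow_functor _ HX).
- exact: ppow_functor.
rewrite -diag_nat /= Tact_tcls //.
have [P [EP HP]] := @fp_diag X HX n (a + 0) b (act (sumI (Inj _ (@cast_ord_inj _ _ (esym (addn0 a)))) (idI b)) y).
rewrite EP mu_tcls //; last exact: ppow_functor.
eexists; split; first reflexivity.
move=> i lti; have [M1 [HM1 EM1]] := HP i lti.
exists (compI (Inj _ (@cast_ord_inj _ _ (esym (addnA a 0 (Dn n b)))))
          (compI M1 (sumI (Inj _ (@cast_ord_inj _ _ (esym (addn0 a)))) (idI b)))).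
split.
  move=> o; have := ordv o; rewrite hnE !(hn_comp, hn_cast, hn_sumI, hn_idI).
  rewrite (hn_gen (F := fun v => if v < a + 0 then v else v + i * b) HM1); set ib := i * b.
  have : ib + b <= Dn n b by rewrite DnE /ib -mulSnr leq_mul2r lti orbT.
  by repeat split_if; simpl in *; lia.
rewrite (nthc_act (Y:=X)) EM1 /=; congr Some; rewrite !(act_comp HX); exact: act_ext.
Qed.

Lemma shI_lt m k off (H : off + k <= m) : forall v, v < k -> off + v < m.
Proof. move=> v lv; lia. Qed.
Lemma shI_inj off k : forall v w, v < k -> w < k -> off + v = off + w -> v = w.
Proof. move=> v w _ _; lia. Qed.
Definition shI m k off (H : off + k <= m) : inj k m :=
  @mkI k m (fun v => off + v) (shI_lt H) (@shI_inj off k).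
Lemma hn_shI m k off (H : off + k <= m) v : hn (shI H) v = if v < k then off + v else 0.
Proof. exact: hn_mk. Qed.

Lemma blk_lt n b i k : i < n -> k < b -> i * b + k < Dn n b.
Proof.
move=> lin lkb; rewrite DnE; apply: (@leq_trans (i.+1 * b)).
  by rewrite mulSnr ltn_add2l.
by rewrite leq_mul2r lin orbT.
Qed.

Lemma blk_eq b i1 i2 k1 k2 : k1 < b -> k2 < b -> i1 * b + k1 = i2 * b + k2 -> i1 = i2.
Proof.
move=> l1 l2 E; have := congr1 (fun x => x %/ b) E.
have bp : 0 < b by lia.
by rewrite /= !divnMDl // !divn_small // !addn0.
Qed.

Theorem theorem9p6 :
  forall X : psh, is_functor X ->
  forall A : psh, is_functor A ->
  forall f g : nat_trans A (T (T X)),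
    is_natural f -> is_natural g ->
    (forall (n a : nat) (x : A a),
        kcomp (samp X n) f a x = kcomp (samp X n) g a x) ->
    forall (a : nat) (x : A a), f a x = g a x.
Proof.
move=> X HX A HA f g Hf Hg Hs a x.
have HT := T_functor HX.
have [c [t EF]] := tcls_surj (f a x); have [b [y Et]] := tcls_surj t.
have [c' [t' EG]] := tcls_surj (g a x); have [b' [y' Et']] := tcls_surj t'.
subst t t'.
pose n := (c + c').+1.
have Hn := Hs n a x.
rewrite /kcomp EF EG in Hn.
have Hsn := samp_nat HX n; have HTn := T_functor (ppow_functor n HX).
rewrite !Tmap_tcls // in Hn.
have [Q [EQ HQ]] := @samp_tcls X HX n (a + c) b y.
have [Q' [EQ' HQ']] := @samp_tcls X HX n (a + c') b' y'.
rewrite EQ EQ' !mu_tcls in Hn; try exact: ppow_functor.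
move/tcls_eq: Hn => /(_ (ppow_functor n HX)) [e [Hh [Hh' E]]].
change (inj (c + Dn n b) e) in Hh; change (inj (c' + Dn n b') e) in Hh'.
pose P1 i j := [exists kk : 'I_b, hn Hh (c + i * b + kk) == hn Hh' j].
pose P2 i j := [exists kk : 'I_b', hn Hh' (c' + i * b' + kk) == hn Hh j].
have U1 : forall i1 i2 j, i1 < n -> i2 < n -> j < c' -> P1 i1 j -> P1 i2 j -> i1 = i2.
  move=> i1 i2 j l1 l2 lj /existsP [k1 /eqP e1] /existsP [k2 /eqP e2].
  have := blk_lt l1 (ltn_ord k1); have := blk_lt l2 (ltn_ord k2) => b2 b1.
  have := @hn_inj _ _ Hh (c + i1 * b + k1) (c + i2 * b + k2).
  rewrite e1 e2 => /(_ ltac:(lia) ltac:(lia) erefl) eq.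
  by apply: (@blk_eq b _ _ k1 k2); [exact: ltn_ord|exact: ltn_ord|lia].
have U2 : forall i1 i2 j, i1 < n -> i2 < n -> j < c -> P2 i1 j -> P2 i2 j -> i1 = i2.
  move=> i1 i2 j l1 l2 lj /existsP [k1 /eqP e1] /existsP [k2 /eqP e2].
  have := blk_lt l1 (ltn_ord k1); have := blk_lt l2 (ltn_ord k2) => b2 b1.
  have := @hn_inj _ _ Hh' (c' + i1 * b' + k1) (c' + i2 * b' + k2).
  rewrite e1 e2 => /(_ ltac:(lia) ltac:(lia) erefl) eq.
  by apply: (@blk_eq b' _ _ k1 k2); [exact: ltn_ord|exact: ltn_ord|lia].
have ltcn : c' + c < n by rewrite /n addnC.
have [i [lti [N1 N2]]] := pigeon U1 U2 ltcn.
have [M [HM EM]] := HQ i lti; have [M' [HM' EM']] := HQ' i lti.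
have EE := congr1 (fun p => nthc p i) E.
cbv beta in EE; rewrite [projT2 _]/= [projT2 _]/= in EE.
rewrite !(nthc_act (Y:=X)) EM EM' in EE; case: EE => EE.
have bnd : i * b + b <= Dn n b by rewrite DnE -mulSnr leq_mul2r lti orbT.
have bnd' : i * b' + b' <= Dn n b' by rewrite DnE -mulSnr leq_mul2r lti orbT.
pose inE1 w := [exists j : 'I_c, hn Hh j == w] || [exists j : 'I_c', hn Hh' j == w].
have T1 : forall w, w < c -> inE1 (hn Hh w) = true.
  by move=> w lw; apply/orP; left; apply/existsP; exists (Ordinal lw).
have T1' : forall w, w < c' -> inE1 (hn Hh' w) = true.
  by move=> w lw; apply/orP; right; apply/existsP; exists (Ordinal lw).
have T2 : forall w, c + i * b <= w -> w < c + i * b + b -> inE1 (hn Hh w) = false.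
  move=> w l1 l2; apply/norP; split; apply/negP => /existsP [j /eqP ej].
    have lj := ltn_ord j.
    have := @hn_inj _ _ Hh j w ltac:(lia) ltac:(lia) ej; lia.
  move/negP: (N1 j (ltn_ord j)); apply; apply/existsP.
  have lk : w - (c + i * b) < b by lia.
  by exists (Ordinal lk) => /=; rewrite subnKC ?ej.
have T2' : forall w, c' + i * b' <= w -> w < c' + i * b' + b' -> inE1 (hn Hh' w) = false.
  move=> w l1 l2; apply/norP; split; apply/negP => /existsP [j /eqP ej]; last first.
    have lj := ltn_ord j.
    have := @hn_inj _ _ Hh' j w ltac:(lia) ltac:(lia) ej; lia.
  move/negP: (N2 j (ltn_ord j)); apply; apply/existsP.
  have lk : w - (c' + i * b') < b' by lia.
  by exists (Ordinal lk) => /=; rewrite subnKC ?ej.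
pose sF v := if v < a then v else if inE1 (v - a) then v else v + e.
have sig_lt : forall v, v < a + e -> sF v < a + e + e.
  by move=> v lv; rewrite /sF; repeat case: ifP => ?; lia.
have sig_inj : forall v w, v < a + e -> w < a + e -> sF v = sF w -> v = w.
  by move=> v w lv lw; rewrite /sF; repeat case: ifP => ?; lia.
pose sigma := @mkI (a + e) (a + e + e) sF sig_lt sig_inj.
have bk : c + i * b + b <= c + Dn n b by lia.
have bk' : c' + i * b' + b' <= c' + Dn n b' by lia.
pose h := compI Hh (Inj _ (@lshift_inj c (Dn n b))).
pose h' := compI Hh' (Inj _ (@lshift_inj c' (Dn n b'))).
pose k := compI Hh (shI bk).
pose k' := compI Hh' (shI bk').
rewrite EF EG; apply/tcls_eq => //; exists e, h, h' => /=.
rewrite !Tact_tcls //; apply/tcls_eq => //; exists e, k, k' => /=.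
have C1 : act (sumI (idI (a + e)) k) (act (sumI (sumI (idI a) h) (idI b)) y) =
  act sigma (act (sumI (idI a) Hh) (act (Inj _ (@cast_ord_inj _ _ (esym (addnA a c (Dn n b))))) (act M y))).
  rewrite !act_comp //; apply: act_ext => o; have := ordv o.
  rewrite /k /h /sigma !hnE !(hn_comp, hn_sumI, hn_idI, hn_lsh, hn_cast, hn_mk, hn_shI).
  rewrite (hn_gen (F := fun v => if v < a + c then v else v + i * b) HM).
  rewrite /sF; set v := val o; set ib := i * b => lv.
  case: (ltnP v a) => h1.
    by repeat split_if; hnlt; hncong; simpl in *; lia.
  case: (ltnP v (a + c)) => h2.
    have T1v := T1 (v - a) ltac:(lia).
    by repeat split_if; hnlt; hncong; try congruence; simpl in *; lia.
  have T2v := T2 (v + ib - a) ltac:(lia) ltac:(lia).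
  by repeat split_if; hnlt; hncong; try congruence; simpl in *; lia.
have C2 : act (sumI (idI (a + e)) k') (act (sumI (sumI (idI a) h') (idI b')) y') =
  act sigma (act (sumI (idI a) Hh') (act (Inj _ (@cast_ord_inj _ _ (esym (addnA a c' (Dn n b'))))) (act M' y'))).
  rewrite !act_comp //; apply: act_ext => o; have := ordv o.
  rewrite /k' /h' /sigma !hnE !(hn_comp, hn_sumI, hn_idI, hn_lsh, hn_cast, hn_mk, hn_shI).
  rewrite (hn_gen (F := fun v => if v < a + c' then v else v + i * b') HM').
  rewrite /sF; set v := val o; set ib := i * b' => lv.
  case: (ltnP v a) => h1.
    by repeat split_if; hnlt; hncong; simpl in *; lia.
  case: (ltnP v (a + c')) => h2.
    have T1v := T1' (v - a) ltac:(lia).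
    by repeat split_if; hnlt; hncong; try congruence; simpl in *; lia.
  have T2v := T2' (v + ib - a) ltac:(lia) ltac:(lia).
  by repeat split_if; hnlt; hncong; try congruence; simpl in *; lia.
rewrite C1 C2; congr (act sigma _); exact: EE.
Qed.
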